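(* Let $N,M\ge1$, let $a_1,\dots,a_M\ge 2$ be real numbers, and for each $m=1,\dots,M$ let $i_m,j_m,k_m\in\{1,\dots,N\}$. Consider the system of inequalities in real variables $x_1,\dots,x_N$: $$a_m x_{i_m}\le x_{j_m}+x_{k_m}\quad (m=1,\dots,M),\qquad x_i>0\quad(i=1,\dots,N).$$ Let $\vec D$ be the digraph on vertex set $\{1,\dots,N\}$ which, for each $m$, contains the directed edges $(i_m,j_m)$ and $(i_m,k_m)$. If $\vec D$ is strongly connected, then the system is feasible if and only if $a_1=a_2=\cdots=a_M=2$, and in that case the feasible solutions are exactly those with $x_1=x_2=\cdots=x_N$. *)

(* Defs.v *)
From mathcomp Require Import all_boot all_order all_algebra.
Set Implicit Arguments. Unset Strict Implicit. Unset Printing Implicit Defensive.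
Import Order.TTheory GRing.Theory Num.Theory.
Local Open Scope ring_scope.

(* Indices 1..N are represented by 'I_N, constraints 1..M by 'I_M. *)

Definition feasible (R : realFieldType) (N M : nat) (a : 'I_M -> R)
  (i j k : 'I_M -> 'I_N) (x : 'I_N -> R) : Prop :=
  (forall m : 'I_M, a m * x (i m) <= x (j m) + x (k m)) /\
  (forall n : 'I_N, 0 < x n).

Definition sysedge (N M : nat) (i j k : 'I_M -> 'I_N) : rel 'I_N :=
  fun u v => [exists m : 'I_M, (i m == u) && ((j m == v) || (k m == v))].

Definition strongly_connected (T : finType) (e : rel T) : Prop :=
  forall u v : T, connect e u v.

(* Main.v *)
Require Import Defs.
From mathcomp Require Import all_boot all_order all_algebra.
From mathcomp Require Import lra.
Import Order.TTheory GRing.Theory Num.Theory.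
Local Open Scope ring_scope.

Lemma key (R : realFieldType) (N M : nat) (hN : (1 <= N)%N)
  (a : 'I_M -> R) (ha : forall m, 2 <= a m) (i j k : 'I_M -> 'I_N)
  (hD : strongly_connected (sysedge i j k)) (x : 'I_N -> R) :
  feasible a i j k x -> (forall n n', x n = x n') /\ (forall m, a m = 2).
Proof.
move=> [hf hp].
have [n0 hmax] : exists n, forall m, x m <= x n.
  case: (@arg_maxP _ _ _ (Ordinal hN) xpredT x erefl) => n _ H.
  by exists n => m; apply: H.
move: hmax; set X := x n0 => hmax.
have hX : 0 < X by apply: hp.
have step : forall m, x (i m) = X ->
    [/\ x (j m) = X, x (k m) = X & a m = 2].
  move=> m him.
  have h1 := hf m. rewrite him in h1.
  have hj := hmax (j m). have hk := hmax (k m).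
  have h2 : 2 * X <= a m * X by rewrite ler_pM2r.
  have ej : x (j m) = X by lra.
  have ek : x (k m) = X by lra.
  split => //.
  have : a m * X <= 2 * X by lra.
  rewrite ler_pM2r // => h3. have := ha m. lra.
have claim : forall p u, x u = X -> path (sysedge i j k) u p -> x (last u p) = X.
  elim=> [|w p IH] u hu /=; first by [].
  case/andP => huw hpath.
  apply: (IH w) => //.
  case/existsP: huw => m /andP [/eqP hi /orP [] /eqP <-];
    by case: (step m); rewrite ?hi.
have all : forall v, x v = X.
  move=> v. case/connectP: (hD n0 v) => p hpath ->.
  exact: claim.
split; first by move=> n n'; rewrite !all.
move=> m. by case: (step m (all _)).
Qed.

Theorem lemma2p3 (R : realFieldType) (N M : nat) (hN : (1 <= N)%N) (hM : (1 <= M)%N)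
  (a : 'I_M -> R) (ha : forall m, 2 <= a m) (i j k : 'I_M -> 'I_N)
  (hD : strongly_connected (sysedge i j k)) :
  ((exists x : 'I_N -> R, feasible a i j k x) <-> (forall m, a m = 2)) /\
  ((forall m, a m = 2) ->
     forall x : 'I_N -> R,
       feasible a i j k x <-> ((forall n, 0 < x n) /\ (forall n n', x n = x n'))).
Proof.
split.
  split.
    by case=> x hx; case: (@key R N M hN a ha i j k hD x hx).
  move=> h2; exists (fun _ => 1); split => [m|n]; last by [].
  rewrite h2; lra.
move=> h2 x; split.
  move=> hx; split; first by case: hx.
  by case: (@key R N M hN a ha i j k hD x hx).
case=> hp he; split => // m.
rewrite h2 (he (j m) (i m)) (he (k m) (i m)); lra.
Qed.
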